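(* Let $(X,Y)$ be a random pair with values in $\mathcal X\times\{1,\dots,K\}$, let $f:\mathcal X\to\Delta^K$ be a probabilistic classifier, and let $\ell:\mathcal X\times\{1,\dots,K\}\to\mathbb R$ be a loss with $\ell(X,Y)$ and $R(X,Y)\ell(X,Y)$ integrable. Suppose that either (i) $\mathbb E[(R(X,Y)-1)(\ell(X,Y)-1)]\ge -\mathbb E[\ell(X,Y)]$, or (ii) $f(X)_Y>0$ almost surely and $\ell$ is the cross-entropy loss $\ell(X,Y)=-\log f(X)_Y$. Then $$\mathbb E[R(X,Y)-1]\le \mathbb E[R(X,Y)\cdot \ell(X,Y)].$$
   Context: For $x\in\mathcal X$ and $y\in\{1,\dots,K\}$, the label rank is $R(x,y)=\sum_{l=1}^K \mathbf 1[f(x)_l\ge f(x)_y]$, where $f(x)_l$ is the $l$-th coordinate of $f(x)\in\Delta^K$ (the probability simplex). *)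

(* Defs.v *)
From HB Require Import structures.
From mathcomp Require Import all_boot all_order all_algebra.
From mathcomp Require Import all_classical all_reals all_analysis.
Set Implicit Arguments. Unset Strict Implicit. Unset Printing Implicit Defensive.
Import Order.TTheory GRing.Theory Num.Theory.
Local Open Scope ring_scope.

Definition in_simplex (R : realType) (K : nat) (p : 'I_K -> R) : Prop :=
  (forall l, 0 <= p l) /\ \sum_(l < K) p l = 1.

Definition label_rank (R : realType) (Xs : Type) (K : nat)
  (f : Xs -> 'I_K -> R) (x : Xs) (y : 'I_K) : R :=
  (#|[set l : 'I_K | f x y <= f x l]|)%:R.

(* Main.v *)
Require Import Defs.
From HB Require Import structures.
From mathcomp Require Import all_boot all_order all_algebra.
From mathcomp Require Import all_classical all_reals all_analysis.
From mathcomp Require Import ring lra.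
Import Order.TTheory GRing.Theory Num.Theory.
Local Open Scope ring_scope.
Local Open Scope classical_set_scope.

Lemma label_rank_sum (R : realType) (Xs : Type) (K : nat)
  (f : Xs -> 'I_K -> R) x y :
  label_rank f x y = \sum_(l < K) ((f x y <= f x l)%R : bool)%:R.
Proof.
rewrite /label_rank -sum1_card natr_sum big_mkcond /=.
by apply: eq_bigr => l _; rewrite inE; case: (_ <= _).
Qed.

Lemma meas_fy (R : realType) (dO : measure_display) (Omega : measurableType dO)
  (d : measure_display) (Xs : measurableType d) (K : nat)
  (X : Omega -> Xs) (Y : Omega -> 'I_K) (f : Xs -> 'I_K -> R)
  (mX : measurable_fun setT X)
  (mY : forall k : 'I_K, measurable [set w | Y w = k])
  (mf : forall k : 'I_K, measurable_fun setT (fun x => f x k)) :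
  (forall l, measurable_fun setT (fun w => f (X w) l)) /\
  measurable_fun setT (fun w => f (X w) (Y w)).
Proof.
have ml : forall l, measurable_fun setT (fun w => f (X w) l).
  by move=> l; exact: (measurableT_comp (mf l) mX).
split => //.
have -> : (fun w => f (X w) (Y w)) =
   (fun w => \sum_(k < K) \1_[set w | Y w = k] w * f (X w) k).
  apply/funext => w; rewrite (bigD1 (Y w)) //= big1 ?addr0.
    by rewrite indicE mem_set // mul1r.
  move=> k /negbTE nk; rewrite indicE memNset ?mul0r //= => h.
  by move: nk; rewrite h eqxx.
apply: measurable_sum => k; apply: measurable_realfun.measurable_funM => //.
Qed.

Lemma meas_rank (R : realType) (dO : measure_display) (Omega : measurableType dO)
  (d : measure_display) (Xs : measurableType d) (K : nat)
  (X : Omega -> Xs) (Y : Omega -> 'I_K) (f : Xs -> 'I_K -> R)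
  (mX : measurable_fun setT X)
  (mY : forall k : 'I_K, measurable [set w | Y w = k])
  (mf : forall k : 'I_K, measurable_fun setT (fun x => f x k)) :
  measurable_fun setT (fun w => label_rank f (X w) (Y w)).
Proof.
have [ml my] := @meas_fy R dO Omega d Xs K X Y f mX mY mf.
have -> : (fun w => label_rank f (X w) (Y w)) =
   (fun w => \sum_(l < K) \1_[set w | f (X w) (Y w) <= f (X w) l] w).
  apply/funext => w; rewrite label_rank_sum; apply: eq_bigr => l _.
  rewrite indicE; have [h|h] := boolP (f (X w) (Y w) <= f (X w) l); [by rewrite mem_set|by rewrite memNset //= => h'; rewrite h' in h].
apply: measurable_sum => l; apply: measurable_realfun.measurable_indic.
have M := measurable_realfun.measurable_fun_ler my (ml l) measurableT.
have := M [set true] I; rewrite setTI.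
by congr measurable; apply/seteqP; split => w /=.
Qed.

Lemma rank_mul_le1 (R : realType) (Xs : Type) (K : nat)
  (f : Xs -> 'I_K -> R) x y : in_simplex (f x) ->
  label_rank f x y * f x y <= 1.
Proof.
move=> [f0 f1]; rewrite /label_rank mulr_natl -sumr_const.
rewrite -f1 big_mkcond /=; apply: ler_sum => l _.
by case: ifP => [|_]; [rewrite inE|].
Qed.

Lemma rank_bounds (R : realType) (Xs : Type) (K : nat)
  (f : Xs -> 'I_K -> R) x y : 0 <= label_rank f x y <= K%:R.
Proof.
rewrite /label_rank ler0n /= ler_nat.
by rewrite (leq_trans (max_card _)) // card_ord.
Qed.

Lemma pointwise_ce (R : realType) (Xs : Type) (K : nat)
  (f : Xs -> 'I_K -> R) x y : in_simplex (f x) -> 0 < f x y ->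
  label_rank f x y - 1 <= label_rank f x y * - ln (f x y).
Proof.
move=> hs p0; have h1 := @rank_mul_le1 R Xs K f x y hs.
have /andP[r0 _] := @rank_bounds R Xs K f x y.
have hl : ln (f x y) <= f x y - 1.
  have := @le_ln1Dx R (f x y - 1); rewrite addrCA subrr addr0; apply.
  by rewrite ltrBrDl addrN.
apply: (le_trans (y := label_rank f x y * (1 - f x y))).
  by rewrite mulrBr mulr1 lerB.
by apply: ler_wpM2l => //; rewrite lerNr opprB.
Qed.

Theorem theorem2 (R : realType) (dO : measure_display) (Omega : measurableType dO)
  (P : probability Omega R) (d : measure_display) (Xs : measurableType d) (K : nat)
  (X : Omega -> Xs) (Y : Omega -> 'I_K)
  (f : Xs -> 'I_K -> R) (loss : Xs -> 'I_K -> R)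
  (mX : measurable_fun setT X)
  (mY : forall k : 'I_K, measurable [set w | Y w = k])
  (mf : forall k : 'I_K, measurable_fun setT (fun x => f x k))
  (hf : forall x, in_simplex (f x))
  (int_l : P.-integrable setT (fun w => (loss (X w) (Y w))%:E))
  (int_Rl : P.-integrable setT
     (fun w => (label_rank f (X w) (Y w) * loss (X w) (Y w))%:E))
  (hcase :
     (\int[P]_w (((label_rank f (X w) (Y w) - 1) * (loss (X w) (Y w) - 1))%:E)
        >= - \int[P]_w ((loss (X w) (Y w))%:E))%E
     \/
     ((\forall w \ae P, 0 < f (X w) (Y w)) /\
      (forall x y, loss x y = - ln (f x y)))) :
  (\int[P]_w ((label_rank f (X w) (Y w) - 1)%:E)
     <= \int[P]_w ((label_rank f (X w) (Y w) * loss (X w) (Y w))%:E))%E.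
Proof.
have mr := @meas_rank R dO Omega d Xs K X Y f mX mY mf.
have int_r : P.-integrable setT (fun w => (label_rank f (X w) (Y w) - 1)%:E).
  apply: (@le_integrable _ _ _ _ _ measurableT _ (EFin \o cst (K%:R + 1))) => //.
  - apply/measurable_realfun.measurable_EFinP; apply: measurable_realfun.measurable_funB => //.
  - move=> w _ /=; rewrite lee_fin.
    have /andP[r0 rK] := @rank_bounds R Xs K f (X w) (Y w).
    rewrite [X in _ <= X]ger0_norm ?addr_ge0 //.
    by apply: le_trans (ler_normB _ _) _; rewrite normr1 ger0_norm // lerD2r.
  - exact: finite_measure_integrable_cst.
have fin_l := integrable_fin_num measurableT int_l.
have fin_Rl := integrable_fin_num measurableT int_Rl.
have fin_r := integrable_fin_num measurableT int_r.
case: hcase => [hi|[hae hce]].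
- have int_Rll : P.-integrable setT
      (EFin \o (fun w => label_rank f (X w) (Y w) * loss (X w) (Y w) - loss (X w) (Y w))).
    apply: (eq_integrable measurableT (fun w => (label_rank f (X w) (Y w) * loss (X w) (Y w))%:E - (loss (X w) (Y w))%:E)%E).
      by move=> w _ /=; rewrite EFinB.
    exact: integrableB.
  have E1 : (\int[P]_w (((label_rank f (X w) (Y w) - 1) * (loss (X w) (Y w) - 1))%:E)
     = \int[P]_w ((label_rank f (X w) (Y w) * loss (X w) (Y w) - loss (X w) (Y w))%:E - (label_rank f (X w) (Y w) - 1)%:E))%E.
    apply: eq_integral => w _; rewrite -EFinB; congr EFin; ring.
  have E2 : (\int[P]_w ((label_rank f (X w) (Y w) * loss (X w) (Y w) - loss (X w) (Y w))%:E)
     = \int[P]_w ((label_rank f (X w) (Y w) * loss (X w) (Y w))%:E - (loss (X w) (Y w))%:E))%E.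
    by apply: eq_integral => w _; rewrite -EFinB.
  move: hi; rewrite E1 integralB_EFin // E2 integralB_EFin //.
  move: fin_l fin_Rl fin_r.
  set a := (\int[P]_w _)%E; set b := (\int[P]_w _)%E; set c := (\int[P]_w _)%E.
  move=> fa fb fc.
  rewrite -(fineK fa) -(fineK fb) -(fineK fc) -!EFinB -EFinN !lee_fin => h.
  lra.
- have hfin : forall e : \bar R, e \is a fin_num -> e = (fine e)%:E by move=> e /fineK.
  suff : (0 <= \int[P]_w ((label_rank f (X w) (Y w) * loss (X w) (Y w))%:E - (label_rank f (X w) (Y w) - 1)%:E))%E.
    rewrite integralB_EFin //.
    move: fin_Rl fin_r.
    set b := (\int[P]_w _)%E; set c := (\int[P]_w _)%E.
    move=> fb fc.
    rewrite -(fineK fb) -(fineK fc) -!EFinB !lee_fin => h.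
    lra.
  pose g w := label_rank f (X w) (Y w) * loss (X w) (Y w) - (label_rank f (X w) (Y w) - 1).
  rewrite (eq_integral (fun w => (g w)%:E)); last by move=> w _; rewrite -EFinB.
  have ig : P.-integrable setT (EFin \o g).
    apply: (eq_integrable measurableT (fun w => (label_rank f (X w) (Y w) * loss (X w) (Y w))%:E - (label_rank f (X w) (Y w) - 1)%:E)%E).
      by move=> w _ /=; rewrite EFinB.
    exact: integrableB.
  have mg : measurable_fun setT g.
    by apply/measurable_realfun.measurable_EFinP; exact: (measurable_int _ ig).
  rewrite (ae_eq_integral (fun w => (Num.max (g w) 0)%:E)) //.
  - by apply: integral_ge0 => w _; rewrite lee_fin le_max lexx orbT.
  - by apply/measurable_realfun.measurable_EFinP.
  - apply/measurable_realfun.measurable_EFinP; apply: measurable_realfun.measurable_maxr => //.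
  apply: filterS hae => w hw _; congr EFin.
  rewrite max_l // /g subr_ge0 hce.
  exact: (@pointwise_ce R Xs K f).
Qed.
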